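(* Let $y,l,u\in\mathcal{R}(\mathbb{R}^{+},\mathbb{R})$ be such that $l\leq u$, $l_0\leq y_0\leq u_0$, and $\inf_{s\leq t}(u_s-l_s)>0$ for every $t\geq 0$. Then the reflection problem $RP^u_l(y)$ has at most one solution: if $(x,k)$ and $(\tilde{x},\tilde{k})$ are solutions of $RP^u_l(y)$, then $x=\tilde{x}$ and $k=\tilde{k}$.
   Context: A function $f:\mathbb{R}^+=[0,\infty)\to\mathbb{R}$ is regulated if it has a left limit $f_{t^-}$ at every $t>0$ and a right limit $f_{t^+}$ at every $t\geq0$; $\mathcal{R}(\mathbb{R}^{+},\mathbb{R})$ is the set of regulated functions. Write $\Delta^+f_t=f_{t^+}-f_t$, $\Delta^-f_t=f_t-f_{t^-}$, $a\wedge b=\min(a,b)$, $a\vee b=\max(a,b)$. A regulated function $\phi$ of bounded variation (on every $[0,t]$) decomposes as $\phi_t=\phi^c_t+\sum_{0<s\leq t}\Delta^-\phi_s+\sum_{0\leq s<t}\Delta^+\phi_s$ with $\phi^c$ continuous; its right-continuous part is $\phi^r_t=\phi^c_t+\sum_{0<s\leq t}\Delta^-\phi_s$. Reflection problem $RP^u_l(y)$: for $y,l,u\in\mathcal{R}(\mathbb{R}^{+},\mathbb{R})$ with $l_0\leq y_0\leq u_0$, a pair $(x,k)$ of regulated functions is a solution if there exist $\phi^1,\phi^2$ such that: (i) $x=y+k=y+\phi^1-\phi^2$; (ii) $l\leq x\leq u$; (iii) $\phi^1,\phi^2$ are non-decreasing with $\phi^1_0=\phi^2_0=0$; (iv) $\int_{[0,\infty[}\big((x_s-l_s)\wedge(x_{s^+}-l_{s^+})\big)\,d\phi^{1,r}_s=\int_{[0,\infty[}\big((u_s-x_s)\wedge(u_{s^+}-x_{s^+})\big)\,d\phi^{2,r}_s=0$;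 (v) for every $t\geq0$, $\sum_{s\leq t}(x_{s^+}-l_{s^+})\Delta^+\phi^1_s=\sum_{s\leq t}(u_s-x_s)\Delta^+\phi^1_s=0$ and $\sum_{s\leq t}(u_{s^+}-x_{s^+})\Delta^+\phi^2_s=\sum_{s\leq t}(x_s-l_s)\Delta^+\phi^2_s=0$. Here $\phi^{i,r}$ is the right-continuous part of $\phi^i$. *)

(* Defs.v *)
From HB Require Import structures.
From mathcomp Require Import all_boot all_order all_algebra.
From mathcomp Require Import all_classical all_reals all_analysis.
Set Implicit Arguments. Unset Strict Implicit. Unset Printing Implicit Defensive.
Import Order.TTheory GRing.Theory Num.Theory.
Import numFieldNormedType.Exports.
Local Open Scope classical_set_scope.
Local Open Scope ring_scope.

Section RP.
Variable R : realType.

(* A function on R^+ = [0,oo) is represented by f : R -> R; only its values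
   on [0,oo) matter. *)

Definition regulated (f : R -> R) : Prop :=
  (forall t, 0 < t -> cvg (f x @[x --> t^'-])) /\
  (forall t, 0 <= t -> cvg (f x @[x --> t^'+])).

Definition rlim (f : R -> R) (t : R) : R := lim (f x @[x --> t^'+]).

Definition rjump (f : R -> R) (t : R) : R := rlim f t - f t.

(* right-continuous part phi^r_t = phi^c_t + sum_{0<s<=t} Delta^- phi_s
   = phi_t - sum_{0<=s<t} Delta^+ phi_s (for t >= 0), extended by 0 on
   (-oo,0) so that it is a cumulative function on R. *)
Definition rcpart (phi : R -> R) (t : R) : R :=
  if t < 0 then 0
  else phi t - fine (\esum_(s in [set s : R | (0 <= s < t)%R]) (rjump phi s)%:E)%E.

(* the function as a cumulative function (nondecreasing, right-continuous);
   for a nondecreasing phi on [0,oo) the first branch is always taken.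
   The second branch (idfun) is an irrelevant default. *)
Definition as_cumulative (g : R -> R) : cumulative R R :=
  match pselect (nondecreasing g /\ right_continuous g) with
  | left H => HB.pack_for (cumulative R R) g
                (isCumulative.Build R _ R g (proj1 H) (proj2 H))
  | right _ => [the cumulative R R of idfun]
  end.

Definition dphir (phi : R -> R) :=
  lebesgue_stieltjes_measure (as_cumulative (rcpart phi)).

Definition nondecr_R_plus (phi : R -> R) : Prop :=
  forall s t, 0 <= s -> s <= t -> phi s <= phi t.

Definition RP_solution (y l u x k : R -> R) : Prop :=
  regulated x /\ regulated k /\
  exists phi1 phi2 : R -> R,
    [/\ (* (i) *) (forall t, 0 <= t -> x t = y t + k t /\ k t = phi1 t - phi2 t),
        (* (ii) *) (forall t, 0 <= t -> l t <= x t <= u t),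
        (* (iii) *) regulated phi1 /\ regulated phi2 /\
                    nondecr_R_plus phi1 /\ nondecr_R_plus phi2 /\
                    phi1 0 = 0 /\ phi2 0 = 0,
        (* (iv) *)
        (\int[dphir phi1]_(s in (`[0%R, +oo[%classic : set R) : set (measurableTypeR R))
            (Num.min (x s - l s) (rlim x s - rlim l s))%:E = 0)%E /\
        (\int[dphir phi2]_(s in (`[0%R, +oo[%classic : set R) : set (measurableTypeR R))
            (Num.min (u s - x s) (rlim u s - rlim x s))%:E = 0)%E
      & (* (v) *)
        forall t : R, 0 <= t ->
          (\esum_(s in (`[0%R, t]%classic : set R)) ((rlim x s - rlim l s) * rjump phi1 s)%:E = 0)%E /\
          (\esum_(s in (`[0%R, t]%classic : set R)) ((u s - x s) * rjump phi1 s)%:E = 0)%E /\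
          (\esum_(s in (`[0%R, t]%classic : set R)) ((rlim u s - rlim x s) * rjump phi2 s)%:E = 0)%E /\
          (\esum_(s in (`[0%R, t]%classic : set R)) ((x s - l s) * rjump phi2 s)%:E = 0)%E].

End RP.

(* Main.v *)
Require Import Defs.
From HB Require Import structures.
From mathcomp Require Import all_boot all_order all_algebra.
From mathcomp Require Import all_classical all_reals all_analysis.
From mathcomp Require finmap.
From mathcomp Require Import lra.
Import Order.TTheory GRing.Theory Num.Theory.
Import numFieldNormedType.Exports.
Local Open Scope classical_set_scope.
Local Open Scope ring_scope.
Set Implicit Arguments. Unset Strict Implicit. Unset Printing Implicit Defensive.
Lemma rlimE (R : realType) (f : R -> R) t :
  cvg (f x @[x --> t^'+]) -> f x @[x --> t^'+] --> rlim f t.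
Proof. by []. Qed.

Lemma rlim_ge_cst (R : realType) (f : R -> R) t c :
  cvg (f x @[x --> t^'+]) -> (forall z, t < z -> c <= f z) -> c <= rlim f t.
Proof.
move=> cf H; apply: limr_ge => //; near=> z; apply: H; near: z.
exact: nbhs_right_gt.
Unshelve. all: by end_near. Qed.

Lemma rlim_le_cst (R : realType) (f : R -> R) t b c :
  cvg (f x @[x --> t^'+]) -> t < b -> (forall z, t < z < b -> f z <= c) ->
  rlim f t <= c.
Proof.
move=> cf tb H; apply: limr_le => //; near=> z; apply: H; apply/andP; split.
  near: z; exact: nbhs_right_gt.
near: z; exact: nbhs_right_lt.
Unshelve. all: by end_near. Qed.

Lemma rlim_le_add (R : realType) (f g : R -> R) t b c :
  cvg (f x @[x --> t^'+]) -> cvg (g x @[x --> t^'+]) -> t < b ->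
  (forall z, t < z < b -> f z + c <= g z) -> rlim f t + c <= rlim g t.
Proof.
move=> cf cg tb H.
have -> : rlim f t + c = lim ((f z + c) @[z --> t^'+]).
  apply/esym/cvg_lim => //; apply: cvgD => //; exact: cvg_cst.
apply: ler_lim => //.
  apply/cvg_ex; exists (rlim f t + c); apply: cvgD => //; exact: cvg_cst.
near=> z; apply: H; apply/andP; split.
  near: z; exact: nbhs_right_gt.
near: z; exact: nbhs_right_lt.
Unshelve. all: by end_near. Qed.

Lemma rlim_lin (R : realType) (x y p q : R -> R) t :
  cvg (y z @[z --> t^'+]) -> cvg (p z @[z --> t^'+]) -> cvg (q z @[z --> t^'+]) ->
  (forall z, t < z -> x z = y z + (p z - q z)) ->
  rlim x t = rlim y t + (rlim p t - rlim q t).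
Proof.
move=> cy cp cq H.
have h : (y z + (p z - q z)) @[z --> t^'+] --> rlim y t + (rlim p t - rlim q t).
  by apply: cvgD => //; apply: cvgB.
apply: cvg_lim => //.
apply: cvg_trans h; apply: near_eq_cvg; near=> z; apply/esym/H.
near: z; exact: nbhs_right_gt.
Unshelve. all: by end_near. Qed.
Lemma rjump_ge0 (R : realType) (phi : R -> R) t :
  nondecr_R_plus phi -> cvg (phi x @[x --> t^'+]) -> 0 <= t -> 0 <= rjump phi t.
Proof.
move=> nd cf t0; rewrite /rjump subr_ge0; apply: rlim_ge_cst => // z tz.
by apply: nd => //; exact: ltW.
Qed.

Lemma rlim_le_b (R : realType) (phi : R -> R) t b :
  nondecr_R_plus phi -> cvg (phi x @[x --> t^'+]) -> 0 <= t -> t < b ->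
  rlim phi t <= phi b.
Proof.
move=> nd cf t0 tb; apply: (rlim_le_cst cf tb) => z /andP[tz zb].
by apply: nd; [exact: (le_trans t0 (ltW tz)) | exact: ltW].
Qed.

Lemma seq_max (R : realType) (s : seq R) :
  s != [::] -> exists2 m, m \in s & forall x, x \in s -> x <= m.
Proof.
elim: s => // x s IH _; case: (eqVneq s [::]) => [->|sn].
  by exists x; rewrite ?mem_seq1 // => y; rewrite mem_seq1 => /eqP ->.
have [m ms Hm] := IH sn.
case: (lerP x m) => xm.
  exists m; first by rewrite in_cons ms orbT.
  by move=> y; rewrite in_cons => /orP[/eqP->|/Hm].
exists x; first by rewrite in_cons eqxx.
move=> y; rewrite in_cons => /orP[/eqP->//|/Hm ym].
exact: (le_trans ym (ltW xm)).
Qed.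

Lemma jump_seq (R : realType) (phi : R -> R) :
  nondecr_R_plus phi -> (forall t, 0 <= t -> cvg (phi x @[x --> t^'+])) ->
  forall n (s : seq R) a b, (size s <= n)%N -> uniq s -> 0 <= a -> a <= b ->
  (forall x, x \in s -> a <= x < b) ->
  \sum_(x <- s) rjump phi x <= phi b - phi a.
Proof.
move=> nd rc; elim=> [|n IH] s a b.
  rewrite leqn0 => /nilP -> _ a0 ab _; rewrite big_nil subr_ge0; exact: nd.
move=> sz us a0 ab Hs.
case: (eqVneq s [::]) => [->|sn]; first by rewrite big_nil subr_ge0; exact: nd.
have [m ms Hm] := seq_max sn.
have /andP[am mb] := Hs m ms.
rewrite (perm_big _ (perm_to_rem ms)) big_cons.
have H1 : \sum_(j <- rem m s) rjump phi j <= phi m - phi a.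
  apply: IH => //.
  - by rewrite size_rem //; move: sz; case: (size s).
  - exact: rem_uniq.
  - move=> x; rewrite (mem_rem_uniq _ us) inE => /andP[xm xs].
    have /andP[ax _] := Hs x xs.
    by rewrite ax /= lt_neqAle xm Hm.
have H2 : rjump phi m <= phi b - phi m.
  have m0 : 0 <= m by exact: le_trans a0 am.
  by rewrite /rjump lerB //; apply: rlim_le_b => //; exact: rc.
have -> : phi b - phi a = (phi b - phi m) + (phi m - phi a) by rewrite addrA subrK.
exact: lerD.
Qed.

Definition Jab (R : realType) (phi : R -> R) (a b : R) :=
  (\esum_(s in [set s : R | (a <= s < b)%R]) (rjump phi s)%:E)%E.

Lemma Jab_le (R : realType) (phi : R -> R) a b :
  nondecr_R_plus phi -> (forall t, 0 <= t -> cvg (phi x @[x --> t^'+])) ->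
  0 <= a -> a <= b -> (Jab phi a b <= (phi b - phi a)%:E)%E.
Proof.
move=> nd rc a0 ab; apply: ge_ereal_sup => _ [X [finX XS] <-].
rewrite fsbig_finite //= sumEFin lee_fin.
apply: (jump_seq nd rc (leqnn _)) => //.
  exact: finmap.fset_uniq.
by move=> x; rewrite in_fset_set // inE => /XS.
Qed.

Lemma Jab_ge0 (R : realType) (phi : R -> R) a b :
  nondecr_R_plus phi -> (forall t, 0 <= t -> cvg (phi x @[x --> t^'+])) ->
  0 <= a -> (0 <= Jab phi a b)%E.
Proof.
move=> nd rc a0; apply: esum_ge0 => s /andP[as_ _]; rewrite lee_fin.
have s0 : 0 <= s by exact: le_trans a0 as_.
by apply: rjump_ge0 => //; exact: rc.
Qed.
Lemma Jab_fin (R : realType) (phi : R -> R) a b :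
  nondecr_R_plus phi -> (forall t, 0 <= t -> cvg (phi x @[x --> t^'+])) ->
  0 <= a -> a <= b -> Jab phi a b = (fine (Jab phi a b))%:E.
Proof.
move=> nd rc a0 ab; rewrite fineK //; apply/fin_numPlt; apply/andP; split.
  exact: (lt_le_trans ltNy0 (Jab_ge0 _ nd rc a0)).
exact: (le_lt_trans (Jab_le nd rc a0 ab) (ltry _)).
Qed.

Lemma jr_bounds (R : realType) (phi : R -> R) a b :
  nondecr_R_plus phi -> (forall t, 0 <= t -> cvg (phi x @[x --> t^'+])) ->
  0 <= a -> a <= b -> 0 <= fine (Jab phi a b) <= phi b - phi a.
Proof.
move=> nd rc a0 ab.
have := Jab_le nd rc a0 ab; have := Jab_ge0 b nd rc a0.
by rewrite (Jab_fin nd rc a0 ab) !lee_fin => -> ->.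
Qed.

Lemma Jab_split (R : realType) (phi : R -> R) a m b :
  nondecr_R_plus phi -> (forall t, 0 <= t -> cvg (phi x @[x --> t^'+])) ->
  0 <= a -> a <= m -> m <= b -> Jab phi a b = (Jab phi a m + Jab phi m b)%E.
Proof.
move=> nd rc a0 am mb; rewrite /Jab (esumID [set s | s < m]); last first.
  move=> s /andP[as_ _]; rewrite lee_fin; apply: rjump_ge0 => //;
    [apply: rc|]; exact: le_trans a0 as_.
congr (_ + _)%E; congr esum; apply/seteqP; split => s /=.
- by move=> [/andP[-> _] ->].
- move=> /andP[as_ sm]; split => //; rewrite as_ /=; exact: lt_le_trans sm mb.
- move=> [/andP[_ ->]]; rewrite andbT => /negP; rewrite -leNgt //.
- move=> /andP[ms sb]; split; first by rewrite sb (le_trans am ms).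
  by apply/negP; rewrite -leNgt.
Qed.

Lemma jr_split (R : realType) (phi : R -> R) a m b :
  nondecr_R_plus phi -> (forall t, 0 <= t -> cvg (phi x @[x --> t^'+])) ->
  0 <= a -> a <= m -> m <= b ->
  fine (Jab phi a b) = fine (Jab phi a m) + fine (Jab phi m b).
Proof.
move=> nd rc a0 am mb.
rewrite (Jab_split nd rc a0 am mb) (Jab_fin nd rc a0 am).
rewrite (Jab_fin nd rc (le_trans a0 am) mb) //.
Qed.

Lemma rcpartE (R : realType) (phi : R -> R) t :
  0 <= t -> rcpart phi t = phi t - fine (Jab phi 0 t).
Proof. by move=> t0; rewrite /rcpart ltNge t0. Qed.

Lemma rcpart_diff (R : realType) (phi : R -> R) a b :
  nondecr_R_plus phi -> (forall t, 0 <= t -> cvg (phi x @[x --> t^'+])) ->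
  0 <= a -> a <= b ->
  rcpart phi b - rcpart phi a = phi b - phi a - fine (Jab phi a b).
Proof.
move=> nd rc a0 ab; rewrite !rcpartE //; last exact: le_trans a0 ab.
rewrite (jr_split nd rc (lexx 0) a0 ab); lra.
Qed.
Lemma Jab_ge_pt (R : realType) (phi : R -> R) a b s :
  a <= s < b -> ((rjump phi s)%:E <= Jab phi a b)%E.
Proof.
move=> Hs; apply: esum_ge; exists [set s].
  by split; [exact: finite_set1| move=> z /= ->].
by rewrite fsbig_set1.
Qed.

Lemma jr_ge_pt (R : realType) (phi : R -> R) a b s :
  nondecr_R_plus phi -> (forall t, 0 <= t -> cvg (phi x @[x --> t^'+])) ->
  0 <= a -> a <= s < b -> rjump phi s <= fine (Jab phi a b).
Proof.
move=> nd rc a0 /andP[as_ sb].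
have ab : a <= b by exact: le_trans as_ (ltW sb).
have := Jab_ge_pt phi (s:=s) (a:=a) (b:=b); rewrite as_ sb => /(_ isT).
by rewrite (Jab_fin nd rc a0 ab) lee_fin.
Qed.

Lemma rcpart_nd (R : realType) (phi : R -> R) :
  nondecr_R_plus phi -> (forall t, 0 <= t -> cvg (phi x @[x --> t^'+])) ->
  phi 0 = 0 -> {homo rcpart phi : x y / x <= y}.
Proof.
move=> nd rc p0 x y xy.
case: (ltP y 0) => y0.
  by rewrite /rcpart (le_lt_trans xy y0) y0.
case: (ltP x 0) => x0.
  rewrite {1}/rcpart x0 rcpartE //.
  have /andP[_ h] := jr_bounds nd rc (lexx 0) y0.
  by rewrite subr_ge0 (le_trans h) // p0 subr0.
rewrite -subr_ge0 rcpart_diff //.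
have /andP[_ h] := jr_bounds nd rc x0 xy.
by rewrite subr_ge0.
Qed.

Lemma rcpart_rc (R : realType) (phi : R -> R) :
  nondecr_R_plus phi -> (forall t, 0 <= t -> cvg (phi x @[x --> t^'+])) ->
  phi 0 = 0 -> right_continuous (rcpart phi).
Proof.
move=> nd rc p0 t.
case: (ltP t 0) => t0.
  have -> : rcpart phi t = 0 by rewrite /rcpart t0.
  apply: cvg_near_cst; near=> z.
  have z0 : z < 0 by near: z; exact: nbhs_right_lt.
  by rewrite /rcpart z0.
apply/cvgrPdist_lt => e e0.
have := rlimE (rc t t0) => /cvgrPdist_lt /(_ e e0) H.
near=> z.
have tz : t < z by near: z; exact: nbhs_right_gt.
have hz : `|rlim phi t - phi z| < e by near: z; exact: H.
have d := rcpart_diff nd rc t0 (ltW tz).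
have j := jr_ge_pt nd rc t0 (s:=t) (b:=z); rewrite lexx tz in j.
have := j isT => {}j.
have := rcpart_nd nd rc p0 (ltW tz) => m.
rewrite /rjump in j.
have hz' : phi z - rlim phi t < e.
  by rewrite distrC in hz; exact: le_lt_trans (ler_norm _) hz.
rewrite distrC ger0_norm ?subr_ge0 //.
rewrite d; lra.
Unshelve. all: by end_near. Qed.
Lemma dphir_oc (R : realType) (phi : R -> R) a b :
  nondecr_R_plus phi -> (forall t, 0 <= t -> cvg (phi x @[x --> t^'+])) ->
  phi 0 = 0 -> a <= b ->
  dphir phi `]a, b]%classic = (rcpart phi b - rcpart phi a)%:E.
Proof.
move=> nd rc p0 ab; rewrite /dphir /as_cumulative.
case: pselect => [H|[]]; last first.
  by split; [exact: rcpart_nd | exact: rcpart_rc].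
rewrite /lebesgue_stieltjes_measure /measure_extension measurable_mu_extE;
  last exact: is_ocitv.
by rewrite /= wlength_itv_bnd.
Qed.

Lemma int_lb (R : realType) (mu : {measure set (measurableTypeR R) -> \bar R})
    (D A : set (measurableTypeR R)) (f : R -> R) c (mA : measurable A) :
  0 <= c -> A `<=` D -> (forall x, D x -> 0 <= f x) ->
  (forall x, A x -> c <= f x) ->
  (c%:E * mu A <= \int[mu]_(x in D) (f x)%:E)%E.
Proof.
move=> c0 AD f0 fc.
rewrite ge0_integralE; last by move=> x /f0; rewrite lee_fin.
apply: ereal_sup_ubound => /=.
exists (scale_nnsfun (indic_nnsfun R mA) c0).
  move=> x /=; rewrite /patch measurable_realfun.mindicE.
  case: (boolP (x \in A)) => xA.
    have Dx : x \in D by rewrite inE; apply: AD; rewrite -inE.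
    by rewrite Dx mulr1 lee_fin; apply: fc; rewrite -inE.
  rewrite mulr0; case: ifPn => // Dx; rewrite lee_fin; apply: f0.
  by rewrite -inE.
rewrite /scale_nnsfun /=.
by rewrite sintegralrM sintegral_indic.
Qed.

Lemma mu_set1_cvg (R : realType) (mu : {measure set (measurableTypeR R) -> \bar R})
    (s : R) :
  (mu `](s - 1)%R, s]%classic < +oo)%E ->
  (fun n : nat => mu `]s - n.+1%:R^-1, s]%classic) @ \oo --> mu [set s].
Proof.
move=> fin.
have mF : forall n : nat, measurable (`]s - n.+1%:R^-1, s]%classic : set (measurableTypeR R)).
  by move=> n; apply: sub_sigma_algebra; exact: is_ocitv.
rewrite (set1_bigcap_oc s).
apply: (nonincreasing_cvg_mu (F := fun n : nat => (`]s - n.+1%:R^-1, s]%classic : set (measurableTypeR R)))).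
- by rewrite /= invr1.
- exact: mF.
- by apply: bigcapT_measurable => n; exact: mF.
- move=> m n mn; apply/subsetPset => z /=; rewrite !in_itv /= => /andP[h ->].
  rewrite andbT; apply: le_lt_trans h; rewrite lerB // lef_pV2 ?posrE ?ler_nat //.
Qed.
Lemma esum0_pt (R : realType) (F : R -> R) t s :
  (\esum_(s in (`[0%R, t]%classic : set R)) (F s)%:E = 0)%E -> 0 <= s <= t ->
  F s <= 0.
Proof.
move=> H st.
have : ((F s)%:E <= \esum_(s in (`[0%R, t]%classic : set R)) (F s)%:E)%E.
  apply: esum_ge; exists [set s]; last by rewrite fsbig_set1.
  by split; [exact: finite_set1| move=> z /= ->; rewrite in_itv].
by rewrite H lee_fin.
Qed.

Lemma jump_zero (R : realType) (phi c : R -> R) t s :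
  (\esum_(s in (`[0%R, t]%classic : set R)) (c s * rjump phi s)%:E = 0)%E ->
  0 <= s <= t -> 0 < c s -> 0 <= rjump phi s -> rjump phi s = 0.
Proof.
move=> H st cs js; have := esum0_pt H st => h.
apply/eqP; rewrite eq_le js andbT.
by rewrite -(pmulr_rle0 _ cs).
Qed.

Lemma rlim_diff_ge0 (R : realType) (f g : R -> R) s :
  cvg (f x @[x --> s^'+]) -> cvg (g x @[x --> s^'+]) -> 0 <= s ->
  (forall z, 0 <= z -> f z <= g z) -> 0 <= rlim g s - rlim f s.
Proof.
move=> cf cg s0 fg; rewrite subr_ge0.
have := @rlim_le_add R f g s (s + 1) 0 cf cg; rewrite !addr0; apply.
  by rewrite ltrDl.
move=> z /andP[sz _]; rewrite addr0; apply: fg; exact: le_trans s0 (ltW sz).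
Qed.

Lemma flat (R : realType) (phi f g : R -> R) sg b t dl :
  nondecr_R_plus phi -> (forall t, 0 <= t -> cvg (phi x @[x --> t^'+])) ->
  phi 0 = 0 ->
  (forall t, 0 <= t -> cvg (f x @[x --> t^'+])) ->
  (forall t, 0 <= t -> cvg (g x @[x --> t^'+])) ->
  (forall s, 0 <= s -> f s <= g s) ->
  (\int[dphir phi]_(s in (`[0%R, +oo[%classic : set R) : set (measurableTypeR R))
      (Num.min (g s - f s) (rlim g s - rlim f s))%:E = 0)%E ->
  (forall t, 0 <= t ->
    (\esum_(s in (`[0%R, t]%classic : set R)) ((rlim g s - rlim f s) * rjump phi s)%:E = 0)%E) ->
  0 <= sg -> sg < b -> b < t -> 0 < dl ->
  (forall z, sg < z <= t -> dl < g z - f z) ->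
  phi b = phi sg.
Proof.
move=> nd rc p0 cf cg fg Hint Hes s0 sb bt d0 Hd.
have Hr : forall s, sg <= s < t -> dl <= rlim g s - rlim f s.
  move=> s /andP[ss st]; have s0' : 0 <= s by exact: le_trans s0 ss.
  rewrite lerBrDl; apply: (rlim_le_add (cf s s0') (cg s s0') st).
  move=> z /andP[sz zt].
  suff : dl < g z - f z by lra.
  by apply: Hd; rewrite (le_lt_trans ss sz) ltW.
have J0 : forall s, sg <= s < b -> rjump phi s = 0.
  move=> s /andP[ss sb']; have s0' : 0 <= s by exact: le_trans s0 ss.
  apply: (jump_zero (Hes b _)).
  - exact: le_trans s0 (ltW sb).
  - by rewrite s0' ltW.
  - apply: (lt_le_trans d0); apply: Hr; rewrite ss /=; exact: lt_trans sb' bt.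
  - exact: rjump_ge0 (rc s s0') s0'.
have Jb : fine (Jab phi sg b) = 0.
  rewrite /Jab esum1 // => s /= /J0 ->; done.
have Rflat : forall a, sg < a <= b -> rcpart phi b = rcpart phi a.
  move=> a /andP[sa ab].
  have a0 : 0 <= a by exact: le_trans s0 (ltW sa).
  have mA : measurable (`]a, b]%classic : set (measurableTypeR R)).
    by apply: sub_sigma_algebra; exact: is_ocitv.
  have := @int_lb R (dphir phi) (`[0%R, +oo[%classic) _
    (fun s => Num.min (g s - f s) (rlim g s - rlim f s)) dl mA (ltW d0).
  rewrite Hint [X in (_ * X)%E](_ : _ = (rcpart phi b - rcpart phi a)%:E);
    last exact: dphir_oc.
  rewrite -EFinM lee_fin.
  move=> /(_ _ _ _) H.
  have : dl * (rcpart phi b - rcpart phi a) <= 0.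
    apply: H.
    - move=> z /=; rewrite !in_itv /= => /andP[az _]; rewrite andbT.
      exact: le_trans a0 (ltW az).
    - move=> z /=; rewrite in_itv /= andbT => z0.
      rewrite le_min subr_ge0 fg //=.
      exact: rlim_diff_ge0 (cf z z0) (cg z z0) z0 fg.
    - move=> z /=; rewrite in_itv /= => /andP[az zb].
      rewrite le_min; apply/andP; split.
        apply: ltW; apply: Hd; rewrite (lt_trans sa az) /=.
        exact: le_trans zb (ltW bt).
      apply: Hr; rewrite (ltW (lt_trans sa az)) /=.
      exact: le_lt_trans zb bt.
  rewrite (pmulr_rle0 _ d0) subr_le0 => h.
  apply/eqP; rewrite eq_le h /=; exact: rcpart_nd.
have Rs : rcpart phi sg = rcpart phi b.
  have h1 : rcpart phi z @[z --> sg^'+] --> rcpart phi sg := rcpart_rc nd rc p0 (x:=sg).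
  have h2 : rcpart phi z @[z --> sg^'+] --> rcpart phi b.
    apply: cvg_near_cst; near=> z; apply/esym/Rflat; apply/andP; split.
      near: z; exact: nbhs_right_gt.
    apply: ltW; near: z; exact: nbhs_right_lt.
  by rewrite -(cvg_lim _ h1) // (cvg_lim _ h2).
have := rcpart_diff nd rc s0 (ltW sb).
rewrite Jb Rs subrr subr0 => /esym /eqP; rewrite subr_eq0 => /eqP //.
Unshelve. all: by end_near. Qed.
Lemma seq_ub (R : realType) (S : seq R) sg :
  0 < sg -> (forall x, x \in S -> 0 <= x < sg) ->
  exists m, [/\ 0 <= m, m < sg & forall x, x \in S -> x <= m].
Proof.
move=> s0; elim: S => [|x S IH] H.
  by exists 0; split => //.
have [m [m0 ms Hm]] : exists m, [/\ 0 <= m, m < sg & forall x, x \in S -> x <= m].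
  by apply: IH => y yS; apply: H; rewrite in_cons yS orbT.
have /andP[x0 xs] := H x (mem_head _ _).
case: (lerP x m) => xm.
  exists m; split => // y; rewrite in_cons => /orP[/eqP->//|/Hm//].
exists x; split => // y; rewrite in_cons => /orP[/eqP->//|/Hm ym].
exact: le_trans ym (ltW xm).
Qed.

Lemma two_below (R : realType) (a b sg : R) :
  a < sg -> b < sg -> exists s, [/\ a <= s, b <= s & s < sg].
Proof.
move=> asg bsg; case: (lerP a b) => ab.
  by exists b; split.
by exists a; split => //; exact: ltW.
Qed.

Lemma dphir_set1_cvg (R : realType) (phi : R -> R) (s : R) :
  (dphir phi `](s - 1)%R, s]%classic < +oo)%E ->
  (fun n : nat => dphir phi `]s - n.+1%:R^-1, s]%classic) @ \oo --> dphir phi [set s].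
Proof. exact: (mu_set1_cvg (mu := dphir phi)). Qed.

Lemma noleft (R : realType) (phi : R -> R) sg e :
  nondecr_R_plus phi -> (forall t, 0 <= t -> cvg (phi x @[x --> t^'+])) ->
  phi 0 = 0 -> 0 < sg -> (dphir phi [set sg] = 0)%E -> 0 < e ->
  exists s0, [/\ 0 <= s0, s0 < sg & phi sg - phi s0 < e].
Proof.
move=> nd rc p0 s0 mu0 e0.
have e20 : 0 < e / 2 by rewrite divr_gt0.
have [n Hn] : exists n : nat, rcpart phi sg - rcpart phi (sg - n.+1%:R^-1) < e / 2.
  have fin : (dphir phi `](sg - 1)%R, sg]%classic < +oo)%E.
    rewrite (_ : dphir phi _ = (rcpart phi sg - rcpart phi (sg - 1))%:E) ?ltry //.
    by apply: dphir_oc => //; rewrite lerBlDr lerDl.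
  have := dphir_set1_cvg fin; rewrite mu0.
  rewrite (_ : (fun n : nat => _) = (fun n : nat => (rcpart phi sg - rcpart phi (sg - n.+1%:R^-1))%:E)); last first.
    apply: funext => n; apply: dphir_oc => //.
    by rewrite lerBlDr lerDl invr_ge0.
  move=> /fine_cvgP [_] /= /cvgrPdist_lt /(_ _ e20) [N _ HN].
  exists N; have := HN N (leqnn N); rewrite sub0r normrN.
  by apply: le_lt_trans; exact: ler_norm.
have finJ := Jab_fin nd rc (lexx 0) (ltW s0).
have [s2 [s20 s2s Hs2]] : exists s2, [/\ 0 <= s2, s2 < sg &
    forall s, s2 <= s -> s < sg -> fine (Jab phi s sg) < e / 2].
  have : (Jab phi 0 sg - (e / 2)%:E < Jab phi 0 sg)%E.
    by rewrite finJ -EFinB lte_fin ltrBlDr ltrDl.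
  rewrite {2}/Jab => /ereal_sup_gt [_ [X [finX XS] <-]] HX.
  have [m [m0 ms Hm]] : exists m, [/\ 0 <= m, m < sg &
      forall x, x \in finmap.enum_fset (fset_set X) -> x <= m].
    apply: seq_ub => // x xX; apply: XS; move: xX.
    by rewrite in_fset_set // inE.
  exists ((m + sg) / 2); split.
  - by rewrite divr_ge0 // addr_ge0 // ltW.
  - by rewrite ltr_pdivrMr // mulr_natr mulr2n ltrD2r.
  move=> s ms2 ssg.
  have s00 : 0 <= s by apply: le_trans ms2; rewrite divr_ge0 // addr_ge0 // ltW.
  have lt_ms : m < s.
    apply: lt_le_trans ms2; by rewrite ltr_pdivlMr // mulr_natr mulr2n ltrD2l.
  have h1 : ((\sum_(i \in X) (rjump phi i)%:E) <= Jab phi 0 s)%E.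
    apply: esum_ge; exists X => //; split => // x Xx /=.
    have /andP[x0 _] := XS x Xx; rewrite x0 /=.
    apply: le_lt_trans lt_ms; apply: Hm; by rewrite in_fset_set // inE.
  have sp := jr_split nd rc (lexx 0) s00 (ltW ssg).
  move: HX h1; rewrite finJ (Jab_fin nd rc (lexx 0) s00) fsbig_finite //= sumEFin.
  rewrite -EFinB !lte_fin lee_fin; lra.
have [sa [sa1 sa2 sas]] : exists sa, [/\ 0 <= sa, sg - n.+1%:R^-1 <= sa & sa < sg].
  by apply: two_below => //; rewrite ltrBlDr ltrDl invr_gt0.
have [s [ss1 ss2 ssg]] := two_below sas s2s.
have s00 : 0 <= s by exact: le_trans sa1 ss1.
exists s; split => //.
have d := rcpart_diff nd rc s00 (ltW ssg).
have r1 : rcpart phi (sg - n.+1%:R^-1) <= rcpart phi s.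
  by apply: rcpart_nd => //; exact: le_trans sa2 ss1.
have j := Hs2 s ss2 ssg.
lra.
Qed.
Lemma emul_le0 (R : realType) (c : R) (m : \bar R) :
  0 < c -> (0 <= m)%E -> (c%:E * m <= 0)%E -> m = 0%E.
Proof.
move=> c0; case: m => [r| |] //=.
  rewrite ?lee_fin -?EFinM ?lee_fin => r0 h; congr EFin; apply/eqP.
  by rewrite eq_le r0 andbT -(pmulr_rle0 _ c0).
by move=> _; rewrite mulry gtr0_sg // mul1e.
Qed.

Lemma dphir_ge0 (R : realType) (phi : R -> R) (A : set (measurableTypeR R)) :
  (0 <= dphir phi A)%E.
Proof. exact: (measure_ge0 (dphir phi)). Qed.

Lemma point_zero (R : realType) (phi f g : R -> R) sg c :
  (forall t, 0 <= t -> cvg (f x @[x --> t^'+])) ->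
  (forall t, 0 <= t -> cvg (g x @[x --> t^'+])) ->
  (forall s, 0 <= s -> f s <= g s) ->
  (\int[dphir phi]_(s in (`[0%R, +oo[%classic : set R) : set (measurableTypeR R))
      (Num.min (g s - f s) (rlim g s - rlim f s))%:E = 0)%E ->
  0 <= sg -> 0 < c -> c <= g sg - f sg -> c <= rlim g sg - rlim f sg ->
  (dphir phi [set sg] = 0)%E.
Proof.
move=> cf cg fg Hint s0 c0 h1 h2.
have mA : measurable ([set sg] : set (measurableTypeR R)) by exact: measurable_set1.
have := @int_lb R (dphir phi) (`[0%R, +oo[%classic) _
    (fun s => Num.min (g s - f s) (rlim g s - rlim f s)) c mA (ltW c0).
rewrite Hint => H; apply: (emul_le0 c0 (dphir_ge0 _ _)); apply: H.
- by move=> z /= ->; rewrite in_itv /= s0.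
- move=> z /=; rewrite in_itv /= andbT => z0.
  rewrite le_min subr_ge0 fg //=.
  exact: rlim_diff_ge0 (cf z z0) (cg z z0) z0 fg.
- by move=> z /= ->; rewrite le_min h1 h2.
Qed.

Lemma half (R : realType) (y l u : R -> R) :
  regulated y -> regulated l -> regulated u ->
  forall x k x' k' : R -> R,
    RP_solution y l u x k -> RP_solution y l u x' k' ->
    forall t, 0 <= t -> x t <= x' t.
Proof.
move=> [_ ry] [_ rl] [_ ru] x k x' k'.
move=> [[_ rx] [_ [p1 [p2 [Hi Hii [[_ rp1] [[_ rp2] [nd1 [nd2 [p10 p20]]]]] [I1 I2] Hv]]]]].
move=> [[_ rx'] [_ [q1 [q2 [Hi' Hii' [[_ rq1] [[_ rq2] [nq1 [nq2 [q10 q20]]]]] [J1 J2] Hv']]]]].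
move=> t t0; rewrite leNgt; apply/negP => dt.
pose d s := x s - x' s.
have dE : forall s, 0 <= s -> d s = (p1 s - p2 s) - (q1 s - q2 s).
  move=> s s0; rewrite /d; have [e1 e2] := Hi s s0; have [e1' e2'] := Hi' s s0.
  by rewrite e1 e1' e2 e2'; lra.
have d0 : d 0 = 0 by rewrite dE // p10 p20 q10 q20; lra.
have lx : forall s, 0 <= s -> l s <= x s by move=> s /Hii /andP[].
have xu : forall s, 0 <= s -> x s <= u s by move=> s /Hii /andP[].
have lx' : forall s, 0 <= s -> l s <= x' s by move=> s /Hii' /andP[].
have xu' : forall s, 0 <= s -> x' s <= u s by move=> s /Hii' /andP[].
pose dl := (x t - x' t) / 2.
have dl0 : 0 < dl by rewrite /dl divr_gt0 // subr_gt0.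
have dtl : dl < d t by rewrite /d /dl; lra.
pose A := [set s | 0 <= s <= t /\ d s <= dl].
have A0 : A 0 by split; [rewrite lexx t0 | rewrite d0 ltW].
have hsA : has_sup A by split; [exists 0 | exists t => s [/andP[_ ->]]].
pose sg := sup A.
have sg0 : 0 <= sg by exact: sup_upper_bound hsA _ A0.
have sgt : sg <= t by apply: ge_sup; [exists 0 | move=> s [/andP[_ ->]]].
have F1 : forall z, sg < z <= t -> dl < d z.
  move=> z /andP[sz zt]; rewrite ltNge; apply/negP => dz.
  have : A z by split => //; rewrite zt (le_trans sg0 (ltW sz)).
  by move/(sup_upper_bound hsA); rewrite leNgt sz.
case: (lerP (d sg) dl) => dsg.
-
  have sgt' : sg < t by rewrite lt_neqAle sgt andbT; apply/eqP => e; move: dsg; rewrite e leNgt dtl.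
  pose b := (sg + t) / 2.
  have sgb : sg < b by rewrite /b; lra.
  have bt : b < t by rewrite /b; lra.
  have Ep1 : p1 b = p1 sg.
    apply: (@flat R p1 l x sg b t dl nd1 rp1 p10 rl rx lx I1 _ sg0 sgb bt dl0).
      by move=> t1 t10; have [h _] := Hv t1 t10.
    move=> z /andP[sz zt]; have z0 : 0 <= z by exact: le_trans sg0 (ltW sz).
    have := F1 z; rewrite sz zt => /(_ isT); have := lx' z z0; rewrite /d; lra.
  have Eq2 : q2 b = q2 sg.
    apply: (@flat R q2 x' u sg b t dl nq2 rq2 q20 rx' ru xu' J2 _ sg0 sgb bt dl0).
      by move=> t1 t10; have [_ [_ [h _]]] := Hv' t1 t10.
    move=> z /andP[sz zt]; have z0 : 0 <= z by exact: le_trans sg0 (ltW sz).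
    have := F1 z; rewrite sz zt => /(_ isT); have := xu z z0; rewrite /d; lra.
  have b0 : 0 <= b by exact: le_trans sg0 (ltW sgb).
  have := F1 b; rewrite sgb (ltW bt) => /(_ isT).
  rewrite (dE b b0); move: dsg; rewrite (dE sg sg0).
  have := nd2 sg b sg0 (ltW sgb); have := nq1 sg b sg0 (ltW sgb).
  rewrite Ep1 Eq2; lra.
-
  have sgp : 0 < sg.
    rewrite lt_neqAle sg0 andbT; apply/eqP => e; move: dsg; rewrite -e d0 ltNge ltW //.
  have dsg0 : 0 < d sg by exact: lt_trans dl0 dsg.
  have j2 : rjump p2 sg = 0.
    have [_ [_ [_ h]]] := Hv sg sg0.
    apply: (jump_zero h); first by rewrite sg0 lexx.
      have := lx' sg sg0; rewrite /d in dsg0; lra.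
    exact: rjump_ge0 (rp2 sg sg0) sg0.
  have jq1 : rjump q1 sg = 0.
    have [_ [h _]] := Hv' sg sg0.
    apply: (jump_zero h); first by rewrite sg0 lexx.
      have := xu sg sg0; rewrite /d in dsg0; lra.
    exact: rjump_ge0 (rq1 sg sg0) sg0.
  have jp1 := rjump_ge0 nd1 (rp1 sg sg0) sg0.
  have jq2 := rjump_ge0 nq2 (rq2 sg sg0) sg0.
  have Rx : rlim x sg = rlim y sg + (rlim p1 sg - rlim p2 sg).
    apply: rlim_lin; [exact: ry|exact: rp1|exact: rp2|].
    move=> z sz; have z0 : 0 <= z by exact: le_trans sg0 (ltW sz).
    by have [-> ->] := Hi z z0.
  have Rx' : rlim x' sg = rlim y sg + (rlim q1 sg - rlim q2 sg).
    apply: rlim_lin; [exact: ry|exact: rq1|exact: rq2|].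
    move=> z sz; have z0 : 0 <= z by exact: le_trans sg0 (ltW sz).
    by have [-> ->] := Hi' z z0.
  have Dp : d sg <= rlim x sg - rlim x' sg.
    move: j2 jq1 jp1 jq2; rewrite /rjump Rx Rx' (dE sg sg0); lra.
  have rl' := rlim_diff_ge0 (rl sg sg0) (rx' sg sg0) sg0 lx'.
  have ru' := rlim_diff_ge0 (rx sg sg0) (ru sg sg0) sg0 xu.
  have mu1 : (dphir p1 [set sg] = 0)%E.
    apply: (point_zero rl rx lx I1 sg0 dsg0).
      have := lx' sg sg0; rewrite /d; lra.
    lra.
  have mu2 : (dphir q2 [set sg] = 0)%E.
    apply: (point_zero rx' ru xu' J2 sg0 dsg0).
      have := xu sg sg0; rewrite /d; lra.
    lra.
  pose g := d sg - dl.
  have g0 : 0 < g / 2 by rewrite divr_gt0 // subr_gt0.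
  have [s1 [s10 s1s Hs1]] := noleft nd1 rp1 p10 sgp mu1 g0.
  have [s2 [s20 s2s Hs2]] := noleft nq2 rq2 q20 sgp mu2 g0.
  have [m [m1 m2 ms]] := two_below s1s s2s.
  have eps0 : 0 < sg - m by rewrite subr_gt0.
  have [s As Hs] := @sup_adherent R A (sg - m) eps0 hsA.
  have ssg : s <= sg := sup_upper_bound hsA As.
  case: As => /andP[s0 st] ds.
  have ms' : m < s by move: Hs; rewrite /sg; lra.
  have := nd1 s1 s s10 (ltW (le_lt_trans m1 ms')).
  have := nq2 s2 s s20 (ltW (le_lt_trans m2 ms')).
  have := nd2 s sg s0 ssg; have := nq1 s sg s0 ssg.
  rewrite /g in Hs1 Hs2.
  move: ds dsg Hs1 Hs2; rewrite (dE s s0) (dE sg sg0); lra.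
Qed.
Theorem theorem1 (R : realType) (y l u : R -> R) :
  regulated y -> regulated l -> regulated u ->
  (forall t, 0 <= t -> l t <= u t) ->
  l 0 <= y 0 <= u 0 ->
  (forall t, 0 <= t -> 0 < inf [set u s - l s | s in `[0, t]]) ->
  forall x k x' k' : R -> R,
    RP_solution y l u x k -> RP_solution y l u x' k' ->
    forall t, 0 <= t -> x t = x' t /\ k t = k' t.
Proof.
move=> ry rl ru _ _ _ x k x' k' S1 S2 t t0.
have h1 := half ry rl ru S1 S2 t0.
have h2 := half ry rl ru S2 S1 t0.
have e : x t = x' t by apply/eqP; rewrite eq_le h1 h2.
split => //.
case: S1 => _ [_ [p1 [p2 [Hi _ _ _ _]]]].
case: S2 => _ [_ [q1 [q2 [Hi' _ _ _ _]]]].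
have [a _] := Hi t t0; have [a' _] := Hi' t t0.
lra.
Qed.
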